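(* Let $Q=(Q_0,Q_1,h,t)$ be a quiver with no oriented cycles, and let $\mu$ be an increasing slope function on $\mathrm{mod}\text{-}\mathbb{C}Q$. Then for each $\boldsymbol d\in\mathbb{N}^{Q_0}\setminus\{0\}$, exactly one of the following holds: (a) $\boldsymbol d=\delta_v$ for some $v\in Q_0$. Then $\mathcal{M}^{\rm st}_{\boldsymbol d}(\mu)=\mathcal{M}^{\rm ss}_{\boldsymbol d}(\mu)$ is a single point $*$. (b) $\boldsymbol d\neq\delta_v$ for every $v\in Q_0$, and for some $t\in\mathbb{R}$ we have $\boldsymbol d(v)=0$ for all $v\in Q_0$ with $\mu_v\neq t$. Then $\mathcal{M}^{\rm st}_{\boldsymbol d}(\mu)=\emptyset$ and $\mathcal{M}^{\rm ss}_{\boldsymbol d}(\mu)\cong[*/\mathrm{PGL}_{\boldsymbol d}]$. Also $2-\chi(\boldsymbol d,\boldsymbol d)<0$ in this case. (c) Neither (a) nor (b) holds. Then $\mathcal{M}^{\rm st}_{\boldsymbol d}(\mu)=\mathcal{M}^{\rm ss}_{\boldsymbol d}(\mu)=\emptyset$.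
   Context: A quiver $Q=(Q_0,Q_1,h,t)$ is a finite directed graph with vertex set $Q_0$, edge set $Q_1$, head and tail maps $h,t:Q_1\to Q_0$. An oriented cycle is a closed loop of directed edges. A representation $(\boldsymbol V,\boldsymbol\rho)$ of $Q$ consists of finite-dimensional $\mathbb{C}$-vector spaces $V_v$ ($v\in Q_0$) and linear maps $\rho_e:V_{t(e)}\to V_{h(e)}$ ($e\in Q_1$); these form the $\mathbb{C}$-linear abelian category $\mathrm{mod}\text{-}\mathbb{C}Q$. Its dimension vector is $\boldsymbol d=\dim(\boldsymbol V,\boldsymbol\rho)\in\mathbb{N}^{Q_0}$, $\boldsymbol d(v)=\dim V_v$. For $v\in Q_0$, $\delta_v\in\mathbb{N}^{Q_0}$ has $\delta_v(v)=1$, $\delta_v(w)=0$ for $w\ne v$. For $\boldsymbol d\in\mathbb{N}^{Q_0}$ put $R_{\boldsymbol d}=\prod_{e\in Q_1}\mathrm{Hom}(\mathbb{C}^{\boldsymbol d(t(e))},\mathbb{C}^{\boldsymbol d(h(e))})$, $\mathrm{GL}_{\boldsymbol d}=\prod_{v\in Q_0}\mathrm{GL}(\boldsymbol d(v),\mathbb{C})$ acting by $(A_v)\cdot(B_e)=(A_{h(e)}B_eA_{t(e)}^{-1})$, and $\mathrm{PGL}_{\boldsymbol d}=\mathrm{GL}_{\boldsymbol d}/\mathbb{G}_m$, where $\mathbb{G}_m$ is the diagonal scalars. The projective linear moduli stack of representations of dimension $\boldsymbol d$ is the quotient stack $\mathcal{M}^{\rm pl}_{\boldsymbol d}=[R_{\boldsymbol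 d}/\mathrm{PGL}_{\boldsymbol d}]$. A slope function $\mu$ is given by real numbers $(\mu_v)_{v\in Q_0}$ via $\mu(\boldsymbol d)=\sum_v\mu_v\boldsymbol d(v)/\sum_v\boldsymbol d(v)$ for $\boldsymbol d\in\mathbb{N}^{Q_0}\setminus\{0\}$. A nonzero object $E$ is $\mu$-stable (resp. $\mu$-semistable) if for every subobject $0\neq E'\subsetneq E$ we have $\mu(\dim E')<\mu(\dim E/E')$ (resp. $\le$). $\mathcal{M}^{\rm st}_{\boldsymbol d}(\mu)\subseteq\mathcal{M}^{\rm ss}_{\boldsymbol d}(\mu)\subseteq\mathcal{M}^{\rm pl}_{\boldsymbol d}$ denote the open substacks of $\mu$-stable, resp. $\mu$-semistable, representations of dimension $\boldsymbol d$. The slope function $\mu$ is called increasing if $\mu_v<\mu_w$ for every edge $v\to w$ in $Q$. The Euler form is $\chi_Q(\boldsymbol d,\boldsymbol e)=\sum_{v\in Q_0}\boldsymbol d(v)\boldsymbol e(v)-\sum_{e\in Q_1}\boldsymbol d(t(e))\boldsymbol e(h(e))$, and $\chi(\boldsymbol d,\boldsymbol e)=\chi_Q(\boldsymbol d,\boldsymbol e)+\chi_Q(\boldsymbol e,\boldsymbol d)$. *)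

(* Defs.v *)
From HB Require Import structures.
From mathcomp Require Import all_boot all_order all_algebra.
From mathcomp Require Import complex.
From mathcomp Require Import reals Rstruct.
Set Implicit Arguments. Unset Strict Implicit. Unset Printing Implicit Defensive.
Import Order.TTheory GRing.Theory Num.Theory.
Local Open Scope ring_scope.

Definition RR : realType := Rdefinitions.R.
Definition CC : fieldType := (RR[i])%C.

Record quiver := Quiver {
  Q0 : finType;
  Q1 : finType;
  qhead : Q1 -> Q0;
  qtail : Q1 -> Q0 }.

Definition no_oriented_cycles (Q : quiver) : Prop :=
  forall (e : Q1 Q) (s : seq (Q1 Q)),
    path (fun a b => qhead a == qtail b) e s -> qhead (last e s) != qtail e.

Definition dimvec (Q : quiver) := Q0 Q -> nat.

Definition dimvec_nonzero (Q : quiver) (d : dimvec Q) : Prop := exists v, d v != 0%N.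

Definition delta (Q : quiver) (v : Q0 Q) : dimvec Q := fun w => (w == v : nat).

Definition slope (Q : quiver) (mu : Q0 Q -> RR) (d : dimvec Q) : RR :=
  (\sum_(v : Q0 Q) mu v * (d v)%:R) / (\sum_(v : Q0 Q) d v)%:R.

Definition increasing (Q : quiver) (mu : Q0 Q -> RR) : Prop :=
  forall e : Q1 Q, mu (qtail e) < mu (qhead e).

(* R_d = prod_e Hom(C^{d(t e)}, C^{d(h e)}).  Linear maps are matrices
   acting on row vectors: x |-> x *m B. *)
Definition repspace (Q : quiver) (d : dimvec Q) :=
  forall e : Q1 Q, 'M[CC]_(d (qtail e), d (qhead e)).

(* GL_d, and its action (A_v).(B_e) = (A_{h e} B_e A_{t e}^{-1}),
   written in the row-vector convention. *)
Definition GLd (Q : quiver) (d : dimvec Q) :=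
  { A : forall v : Q0 Q, 'M[CC]_(d v) | forall v, A v \in unitmx }.

Definition GLact (Q : quiver) (d : dimvec Q) (A : GLd d) (B : repspace d)
  : repspace d :=
  fun e => invmx (sval A (qtail e)) *m B e *m sval A (qhead e).

(* Subrepresentations of (C^d, B): families of subspaces (row spaces of
   square matrices) U_v of C^{d(v)} with rho_e(U_{t e}) <= U_{h e}. *)
Definition subrep (Q : quiver) (d : dimvec Q) (B : repspace d)
  (U : forall v : Q0 Q, 'M[CC]_(d v)) : Prop :=
  forall e : Q1 Q, (U (qtail e) *m B e <= U (qhead e))%MS.

Definition subdim (Q : quiver) (d : dimvec Q) (U : forall v : Q0 Q, 'M[CC]_(d v))
  : dimvec Q := fun v => \rank (U v).

Definition proper_nonzero (Q : quiver) (d : dimvec Q) (U : forall v : Q0 Q, 'M[CC]_(d v))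
  : Prop := (exists v, subdim U v != 0%N) /\ (exists v, subdim U v != d v).

Definition quotdim (Q : quiver) (d : dimvec Q) (U : forall v : Q0 Q, 'M[CC]_(d v))
  : dimvec Q := fun v => (d v - subdim U v)%N.

Definition stable (Q : quiver) (mu : Q0 Q -> RR) (d : dimvec Q) (B : repspace d)
  : Prop :=
  dimvec_nonzero d /\
  forall U, subrep B U -> proper_nonzero U ->
    slope mu (subdim U) < slope mu (quotdim U).

Definition semistable (Q : quiver) (mu : Q0 Q -> RR) (d : dimvec Q) (B : repspace d)
  : Prop :=
  dimvec_nonzero d /\
  forall U, subrep B U -> proper_nonzero U ->
    slope mu (subdim U) <= slope mu (quotdim U).

(* Statements about the open substack [S / PGL_d] of M^pl_d = [R_d / PGL_d]
   determined by a GL_d-invariant subset S of (the C-points of) R_d.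
   PGL_d = GL_d / G_m acts through GL_d; scalars act trivially. *)
Definition is_scalar (Q : quiver) (d : dimvec Q) (A : GLd d) : Prop :=
  exists c : CC, forall v, sval A v = c%:M.

Definition substack_empty (Q : quiver) (d : dimvec Q) (S : repspace d -> Prop) : Prop :=
  forall B, ~ S B.

(* [S/PGL_d] is a single point *: S is a single PGL_d-orbit with trivial
   stabilizers in PGL_d (stabilizers in GL_d consist of scalars). *)
Definition substack_point (Q : quiver) (d : dimvec Q) (S : repspace d -> Prop) : Prop :=
  (exists B, S B) /\
  (forall B B', S B -> S B' -> exists A : GLd d, GLact A B = B') /\
  (forall B (A : GLd d), S B -> GLact A B = B -> is_scalar A).

(* [S/PGL_d] = [*/PGL_d]: S is a single point fixed by all of PGL_d. *)
Definition substack_BPGL (Q : quiver) (d : dimvec Q) (S : repspace d -> Prop) : Prop :=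
  exists B0, (forall B, S B <-> B = B0) /\ (forall A : GLd d, GLact A B0 = B0).

Definition chiQ (Q : quiver) (d e : dimvec Q) : int :=
  (\sum_(v : Q0 Q) (d v * e v)%:Z - \sum_(a : Q1 Q) (d (qtail a) * e (qhead a))%:Z)%R.

Definition chi (Q : quiver) (d e : dimvec Q) : int := (chiQ d e + chiQ e d)%R.

(* Main.v *)
Require Import Defs.
From HB Require Import structures.
From mathcomp Require Import all_boot all_order all_algebra zify.
From mathcomp Require Import complex reals Rstruct.
From Stdlib Require Import Classical FunctionalExtensionality.
Import Order.TTheory GRing.Theory Num.Theory.
Local Open Scope ring_scope.

Lemma sum_pos (Q : quiver) (d' : dimvec Q) :
  (exists v, d' v != 0%N) -> (0 : RR) < (\sum_v d' v)%:R.
Proof.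
move=> [w hw]; rewrite ltr0n (bigD1 w) //=; rewrite -lt0n in hw.
exact: ltn_addr.
Qed.

Lemma slope_ge (Q : quiver) (mu : Q0 Q -> RR) (d' : dimvec Q) (M : RR) :
  (exists v, d' v != 0%N) -> (forall v, d' v != 0%N -> M <= mu v) ->
  M <= slope mu d'.
Proof.
move=> hw H; rewrite /slope ler_pdivlMr; last exact: sum_pos.
rewrite natr_sum mulr_sumr; apply: ler_sum => v _.
case: (eqVneq (d' v) 0%N) => [->|hv]; first by rewrite !mulr0.
by rewrite mulrC [X in _ <= X]mulrC ler_wpM2l ?ler0n // H.
Qed.

Lemma slope_le (Q : quiver) (mu : Q0 Q -> RR) (d' : dimvec Q) (M : RR) :
  (exists v, d' v != 0%N) -> (forall v, d' v != 0%N -> mu v <= M) ->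
  slope mu d' <= M.
Proof.
move=> hw H; rewrite /slope ler_pdivrMr; last exact: sum_pos.
rewrite natr_sum mulr_sumr; apply: ler_sum => v _.
case: (eqVneq (d' v) 0%N) => [->|hv]; first by rewrite !mulr0.
by rewrite mulrC [X in _ <= X]mulrC ler_wpM2l ?ler0n // H.
Qed.

Lemma slope_lt (Q : quiver) (mu : Q0 Q -> RR) (d' : dimvec Q) (M : RR) :
  (exists v, d' v != 0%N) -> (forall v, d' v != 0%N -> mu v < M) ->
  slope mu d' < M.
Proof.
move=> hw H; rewrite /slope ltr_pdivrMr; last exact: sum_pos.
case: hw => w hw.
rewrite natr_sum mulr_sumr (bigD1 w) //= [X in _ < X](bigD1 w) //=.
apply: ltr_leD.
  by rewrite ltr_pM2r ?H // ltr0n lt0n.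
apply: ler_sum => v _.
case: (eqVneq (d' v) 0%N) => [->|hv]; first by rewrite !mulr0.
by rewrite ler_wpM2r ?ler0n // ltW // H.
Qed.

Lemma slope_eq (Q : quiver) (mu : Q0 Q -> RR) (d' : dimvec Q) (M : RR) :
  (exists v, d' v != 0%N) -> (forall v, d' v != 0%N -> mu v = M) ->
  slope mu d' = M.
Proof.
move=> hw H; apply/eqP; rewrite eq_le slope_le ?slope_ge // => v hv; by rewrite H.
Qed.

Lemma mx_eq0dim (n m : nat) (A B : 'M[CC]_(n, m)) : (n = 0 \/ m = 0)%N -> A = B.
Proof.
move=> [n0|m0]; apply/matrixP => i j.
  by exfalso; case: i => i; rewrite n0.
by exfalso; case: j => j; rewrite m0.
Qed.

Lemma mx_le1 (n : nat) (M : 'M[CC]_n) : (n <= 1)%N -> M = (\tr M)%:M.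
Proof.
move: M; case: n => [|[|n]] // M _; apply/matrixP => i j.
  by case: i.
by rewrite !ord1 !mxE /mxtrace big_ord1 eqxx mulr1n.
Qed.

Lemma repspace_eq (Q : quiver) (d : dimvec Q) :
  (forall e, d (qtail e) = 0%N \/ d (qhead e) = 0%N) ->
  forall B B' : repspace d, B = B'.
Proof.
move=> H B B'; apply: functional_extensionality_dep => e; exact: mx_eq0dim.
Qed.

Theorem proposition5p1 (Q : quiver) (mu : Q0 Q -> RR)
  (hQ : no_oriented_cycles Q) (hmu : increasing mu)
  (d : dimvec Q) (hd : dimvec_nonzero d) :
  let caseA := exists v : Q0 Q, d = delta v in
  let caseB := (forall v : Q0 Q, d <> delta v) /\
               (exists t : RR, forall v : Q0 Q, mu v != t -> d v = 0%N) in
  let caseC := ~ caseA /\ ~ caseB in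
  (* exactly one of (a), (b), (c) holds *)
  ((caseA /\ ~ caseB /\ ~ caseC) \/ (~ caseA /\ caseB /\ ~ caseC)
     \/ (~ caseA /\ ~ caseB /\ caseC)) /\
  (caseA ->
     (forall B : repspace d, stable mu B <-> semistable mu B) /\
     substack_point (fun B : repspace d => stable mu B)) /\
  (caseB ->
     substack_empty (fun B : repspace d => stable mu B) /\
     substack_BPGL (fun B : repspace d => semistable mu B) /\
     (2 - chi d d < 0)%R) /\
  (caseC ->
     substack_empty (fun B : repspace d => stable mu B) /\
     substack_empty (fun B : repspace d => semistable mu B)).
Proof.
move=> caseA caseB caseC.
have AnB : caseA -> ~ caseB by move=> [v hv] [hB _]; exact: hB v hv.
have rankle : forall (U : forall v, 'M[CC]_(d v)) v, (subdim U v <= d v)%N.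
  by move=> U v; exact: rank_leq_row.
split.
  case: (classic caseA) => hA.
    by left; split=> //; split; [exact: AnB | case].
  case: (classic caseB) => hB.
    by right; left; split=> //; split=> //; case.
  by right; right; split=> //; split=> //; split.
split.
  move=> [v hv].
  have hdv : forall w, d w = (w == v : nat) by rewrite hv.
  have noprop : forall U : forall w, 'M[CC]_(d w), ~ proper_nonzero U.
    move=> U [[w hw] [u hu]].
    case: (eqVneq w v) => [hwv|hwv]; last first.
      by move: (rankle U w) hw; rewrite hdv (negbTE hwv) leqn0 => /eqP ->.
    subst w.
    case: (eqVneq u v) => [huv|huv]; first subst u.
      by move: (rankle U v) hu hw; rewrite hdv eqxx; case: (subdim U v) => [|[|n]].
    by move: (rankle U u) hu; rewrite hdv (negbTE huv) leqn0 => /eqP ->.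
  split.
    by move=> B; split => [[h1 h2]|[h1 h2]]; split=> // U _ hp; exfalso; apply: (noprop U).
  have H0 : forall e, d (qtail e) = 0%N \/ d (qhead e) = 0%N.
    move=> e; have := hQ e [::] isT; rewrite /= => hne.
    case: (eqVneq (qtail e) v) => [ht|ht]; [right | left]; rewrite hdv.
      by rewrite -ht (negbTE hne).
    by rewrite (negbTE ht).
  have stB : forall B : repspace d, stable mu B.
    by move=> B; split => // U _ hp; exfalso; exact: noprop U hp.
  split; first by exists (fun e => 0); exact: stB.
  split.
    move=> B B' _ _.
    exists (exist (fun A : forall w, 'M[CC]_(d w) => forall w, A w \in unitmx) (fun w => 1%:M) (fun w => unitmx1 _ _)); exact: repspace_eq.
  move=> B A _ _; exists (\tr (sval A v)) => w.
  case: (eqVneq w v) => [->|hwv]; first by apply: mx_le1; rewrite hdv eqxx.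
  by apply: mx_eq0dim; left; rewrite hdv (negbTE hwv).
split.
  move=> [hBnd [t ht]].
  have supp : forall v, d v != 0%N -> mu v = t.
    move=> v hv; case: (eqVneq (mu v) t) => // /ht h; by rewrite h in hv.
  have H0 : forall e, d (qtail e) = 0%N \/ d (qhead e) = 0%N.
    move=> e; case: (eqVneq (d (qtail e)) 0%N) => [|h1]; first by left.
    case: (eqVneq (d (qhead e)) 0%N) => [|h2]; first by right.
    by exfalso; have := hmu e; rewrite (supp _ h1) (supp _ h2) ltxx.
  have slopes : forall U : forall v, 'M[CC]_(d v), proper_nonzero U ->
      slope mu (subdim U) = t /\ slope mu (quotdim U) = t.
    move=> U [[w hw] [u hu]]; split; apply: slope_eq.
    - by exists w.
    - move=> v hv; apply: supp; move: (rankle U v) hv.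
      case: (d v) => [|n] //; by rewrite leqn0 => /eqP ->.
    - by exists u; rewrite /quotdim subn_eq0 -ltnNge ltn_neqAle hu rankle.
    - move=> v; rewrite /quotdim; case: (eqVneq (d v) 0%N) => [->|h _].
        by rewrite sub0n.
      exact: supp.
  have [w hw] := hd.
  pose U0 := fun v => (if v == w then pid_mx 1 else 0) : 'M[CC]_(d v).
  have subrepAll : forall (B : repspace d) (U : forall v, 'M[CC]_(d v)), subrep B U.
    move=> B U e; have -> : U (qtail e) *m B e = 0 by apply: mx_eq0dim.
    exact: sub0mx.
  have U0dim : forall v, subdim U0 v = delta w v.
    move=> v; rewrite /subdim /U0 /delta; case: eqVneq => [->|_].
      by rewrite rank_pid_mx // lt0n.
    exact: mxrank0.
  have pU0 : proper_nonzero U0.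
    split; first by exists w; rewrite U0dim /delta eqxx.
    apply: NNPP => hn; apply: (hBnd w); apply: functional_extensionality => v.
    rewrite -U0dim; apply: NNPP => h; apply: hn; exists v; apply/eqP => e; apply: h.
    by rewrite e.
  split.
    move=> B [_ hs]; have := hs U0 (subrepAll B U0) pU0.
    by have [-> ->] := slopes U0 pU0; rewrite ltxx.
  split.
    exists (fun e => 0); split; last by move=> A; exact: repspace_eq.
    move=> B; split => [_|->]; first exact: repspace_eq.
    split => // U _ hp; by have [-> ->] := slopes U hp.
  have X2 : (2 <= \sum_v d v * d v)%N.
    case: (leqP 2 (d w)) => h2.
      rewrite (bigD1 w) //=; have : (2 <= d w * d w)%N by nia.
      lia.
    have dw1 : d w = 1%N by move: hw h2; lia.
    have [u hu] := pU0.2; rewrite U0dim /delta in hu.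
    case: (eqVneq u w) hu => [->|huw]; first by rewrite ?eqxx dw1.
    rewrite ?(negbTE huw) /= => hu.
    have : (0 < d u * d u)%N by rewrite muln_gt0 andbb lt0n eq_sym.
    rewrite (bigD1 w) // (bigD1 u) //=; lia.
  rewrite /chi /chiQ.
  have -> : \sum_(a : Q1 Q) (d (qtail a) * d (qhead a))%:Z = 0.
    by apply: big1 => a _; case: (H0 a) => ->; rewrite ?mul0n ?muln0.
  rewrite subr0 -(big_morph Posz PoszD (erefl 0%:Z)).
  lia.
move=> [hnA hnB].
suff nss : forall B : repspace d, ~ semistable mu B.
  split => B h; apply: (nss B); last exact h.
  case: h => h1 h2; split => // U hU hp; exact: ltW (h2 U hU hp).
have [v0 hv0] := hd.
have [v1 [hv1 hmu1]] : exists v1, d v1 != 0%N /\ mu v1 != mu v0.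
  apply: NNPP => hn; apply: hnB; split.
    by move=> v hv; apply: hnA; exists v.
  exists (mu v0) => v hmv; apply: NNPP => hdv; apply: hn; exists v; split => //.
  exact/eqP.
have [w [u [hw [hu hlt]]]] : exists w u, d w != 0%N /\ d u != 0%N /\ mu u < mu w.
  case: (ltgtP (mu v1) (mu v0)) => h.
  - by exists v0, v1.
  - by exists v1, v0.
  - by rewrite h eqxx in hmu1.
move=> B [_ hss].
pose M := mu w.
pose U := fun v => (if M <= mu v then 1%:M else 0) : 'M[CC]_(d v).
have hU : subrep B U.
  move=> e; rewrite /U; case: ifP => h.
    rewrite ifT ?submx1 //; exact: le_trans h (ltW (hmu e)).
  by rewrite mul0mx sub0mx.
have sd : forall v, subdim U v = if M <= mu v then d v else 0%N.
  by move=> v; rewrite /subdim /U; case: ifP => _; rewrite ?mxrank1 ?mxrank0.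
have qd : forall v, quotdim U v = if M <= mu v then 0%N else d v.
  by move=> v; rewrite /quotdim sd; case: ifP => _; rewrite ?subnn ?subn0.
have hp : proper_nonzero U.
  split; first by exists w; rewrite sd lexx.
  by exists u; rewrite sd leNgt hlt /= eq_sym.
have h1 : M <= slope mu (subdim U).
  apply: slope_ge; first by exists w; rewrite sd lexx.
  move=> v; rewrite sd; case: ifP => h hv //; by rewrite eqxx in hv.
have h2 : slope mu (quotdim U) < M.
  apply: slope_lt; first by exists u; rewrite qd leNgt hlt /=.
  move=> v; rewrite qd; case: ifP => h hv; first by rewrite eqxx in hv.
  by rewrite ltNge h.
have h3 := hss U hU hp; have := le_lt_trans (le_trans h1 h3) h2; by rewrite ltxx.
Qed.
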